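(* Let $w$ be a classical solution of the bounded-domain problem $(P_\Omega)$, smooth enough that $w(\cdot,\cdot,t)$ is smooth on $\overline\Omega$ with derivatives bounded uniformly in $t\in[0,T]$, $u=w^{1/m}|_{y=0}$ is $C^2$ in $t$ and $u^m$ is $C^2$ in $x$ (with bounded derivatives). Let $L^D_\sigma$ be a discretization of $L_\sigma$ of order $a$. Define the local truncation error $(\tau_{j-1})_i^k$ by: $(\tau_{j-1})_i^k=0$ at $\Gamma_h$ nodes; $(\tau_{j-1})_i^k=L^D_\sigma[(w_j)]_i^k$ at interior nodes ($0<i<I$, $0<k<K$); and at base nodes ($0<i<I$, $k=0$) $$(\tau_{j-1})_i^0=\nu_\sigma\frac{\Delta t}{\Delta x^\sigma}\big[(w_{j-1})_i^1-(w_{j-1})_i^0\big]+[(w_{j-1})_i^0]^{1/m}-[(w_j)_i^0]^{1/m},$$ where $(w_j)_i^k=w(x_i,y_k,t_j)$. Then $$\Lambda:=\max_{i,k,j}|(\tau_j)_i^k|=O\big(\Delta t(\Delta x^{2-\sigma}+\Delta t)+\Delta x^a\big).$$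
   Context: Fix $m\ge1$, $\sigma\in(0,2)$, $T>0$, and $0\le f\in L^1\cap L^\infty$. Constants: $\mu_\sigma=2^{\sigma-1}\Gamma(\sigma/2)/\Gamma(1-\sigma/2)$, $\nu_\sigma=\sigma\mu_\sigma$. Operator $L_\sigma v=\nabla\cdot(y^{1-\sigma}\nabla v)$; normalized $\sigma$-derivative $\frac{\partial v}{\partial y^\sigma}(x,0)=\mu_\sigma\lim_{y\to0}y^{1-\sigma}\partial_y v(x,y)$. Domain (written for space dimension $N=1$; higher $N$ is the tensor-product analogue): $\Omega=(-X,X)\times(0,Y)$, $\Gamma_d=[-X,X]\times\{0\}$, $\Gamma_h=\partial\Omega\setminus\Gamma_d$. Problem $(P_\Omega)$: $L_\sigma w=0$ in $\Omega\times(0,T]$; $\partial_t(w^{1/m})=\frac{\partial w}{\partial y^\sigma}$ on $\Gamma_d\times(0,T]$; $w(x,0,0)=f^m(x)$; $w=0$ on $\Gamma_h$. Grid: $\Delta t=T/J$, $t_j=j\Delta t$; $\Delta x=2X/I$, $x_i=i\Delta x-X$; $\Delta y=Y/K$, $y_k=k\Delta y$, with $\Delta y=\Delta x$. Nodes with $i\in\{0,I\}$ or $k=K$ are $\Gamma_h$ nodes; nodes with $k=0$, $0<i<I$ are base nodes; nodes with $0<i<I$, $0<k<K$ are interior nodes. A discretization $L^D_\sigma$ of $L_\sigma$ has order $a$ if $\max_{i,k}|L^D_\sigma v_i^k-L_\sigma v(x_i,y_k)|\le C_v\Delta x^a$ for every sufficiently regular $v$, where $v_i^k=v(x_i,y_k)$.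 *)

(* Defs.v *)
From Stdlib Require Import Reals Lra Arith ClassicalEpsilon Factorial.
Open Scope R_scope.

(* ---------- Gamma function (Gauss' limit formula, valid for z > 0) ---------- *)
Fixpoint pochh (z : R) (n : nat) : R :=
  match n with
  | O => z
  | S n' => pochh z n' * (z + INR (S n'))
  end.

Definition gauss_seq (z : R) (n : nat) : R :=
  INR (fact n) * Rpower (INR n) z / pochh z n.

Definition Gamma (z : R) : R :=
  epsilon (inhabits 0) (fun g => Un_cv (gauss_seq z) g).

Definition mu_sigma (sigma : R) : R :=
  Rpower 2 (sigma - 1) * Gamma (sigma / 2) / Gamma (1 - sigma / 2).

Definition nu_sigma (sigma : R) : R := sigma * mu_sigma sigma.

(* the derivative of f at x (meaningful when f is differentiable at x) *)
Definition deriv (f : R -> R) (x : R) : R :=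
  epsilon (inhabits 0) (fun l => derivable_pt_lim f x l).

Definition derivable_at (f : R -> R) (x : R) : Prop :=
  exists l, derivable_pt_lim f x l.

Definition cont_within (a b : R) (f : R -> R) (t : R) : Prop :=
  forall eps, 0 < eps -> exists delta, 0 < delta /\
    forall s, a <= s <= b -> Rabs (s - t) < delta -> Rabs (f s - f t) < eps.

Definition has_deriv_within (a b : R) (f : R -> R) (t l : R) : Prop :=
  forall eps, 0 < eps -> exists delta, 0 < delta /\
    forall s, a <= s <= b -> s <> t -> Rabs (s - t) < delta ->
      Rabs ((f s - f t) / (s - t) - l) < eps.

Definition C2_within (a b : R) (f : R -> R) (M : R) : Prop :=
  exists f1 f2 : R -> R, forall s, a <= s <= b ->
    has_deriv_within a b f s (f1 s) /\ has_deriv_within a b f1 s (f2 s) /\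
    cont_within a b f2 s /\ Rabs (f1 s) <= M /\ Rabs (f2 s) <= M.

Definition rlim0 (g : R -> R) (c : R) : Prop :=
  forall eps, 0 < eps -> exists delta, 0 < delta /\
    forall y, 0 < y < delta -> Rabs (g y - c) < eps.

Definition rpow (b p : R) : R := if Rlt_dec 0 b then Rpower b p else 0.

(* ---------- the operator L_sigma v = div (y^{1-sigma} grad v), N = 1 ---------- *)
Definition Lsigma (sigma : R) (v : R -> R -> R) (x y : R) : R :=
  deriv (fun x' => Rpower y (1 - sigma) * deriv (fun x'' => v x'' y) x') x
  + deriv (fun y' => Rpower y' (1 - sigma) * deriv (fun y'' => v x y'') y') y.

Definition pDx (w : R -> R -> R -> R) (x y t : R) : R := deriv (fun s => w s y t) x.
Definition pDxx (w : R -> R -> R -> R) (x y t : R) : R := deriv (fun s => pDx w s y t) x.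
Definition pDy (w : R -> R -> R -> R) (x y t : R) : R := deriv (fun s => w x s t) y.

(* A discrete operator takes the numbers of cells I (in x) and K (in y),
   a grid function v_i^k and returns (L^D v)_i^k. *)
Definition discOp := nat -> nat -> (nat -> nat -> R) -> nat -> nat -> R.

Definition dxI (X : R) (I : nat) : R := 2 * X / INR I.
Definition dyK (Y : R) (K : nat) : R := Y / INR K.
Definition dtJ (T : R) (J : nat) : R := T / INR J.
Definition xnode (X : R) (I i : nat) : R := INR i * dxI X I - X.
Definition ynode (Y : R) (K k : nat) : R := INR k * dyK Y K.
Definition tnode (T : R) (J j : nat) : R := INR j * dtJ T J.

Definition admissible (X Y : R) (I K : nat) : Prop :=
  (0 < I)%nat /\ (0 < K)%nat /\ dyK Y K = dxI X I.

(* L^D has order a: "sufficiently regular" is modelled by an abstract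
   quantitative regularity class Reg v M ("v is regular with regularity
   bounds <= M"); the constant depends on v only through M. *)
Definition disc_order (sigma X Y a : R) (LD : discOp)
  (Reg : (R -> R -> R) -> R -> Prop) : Prop :=
  forall M, exists C, forall v, Reg v M ->
    forall I K, admissible X Y I K ->
    forall i k, (0 < i < I)%nat -> (0 < k < K)%nat ->
      Rabs (LD I K (fun i' k' => v (xnode X I i') (ynode Y K k')) i k
            - Lsigma sigma v (xnode X I i) (ynode Y K k))
      <= C * Rpower (dxI X I) a.

(* local truncation error (tau_j)_i^k  (= the paper's tau_{j-1} with j-1 := j) *)
Definition trunc (sigma m T X Y : R) (LD : discOp) (w : R -> R -> R -> R)
  (I J K j i k : nat) : R :=
  if (Nat.eqb i 0 || Nat.eqb i I || Nat.eqb k K)%bool then 0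
  else if Nat.eqb k 0 then
    nu_sigma sigma * (dtJ T J / Rpower (dxI X I) sigma)
      * (w (xnode X I i) (ynode Y K 1) (tnode T J j)
         - w (xnode X I i) (ynode Y K 0) (tnode T J j))
    + rpow (w (xnode X I i) (ynode Y K 0) (tnode T J j)) (1 / m)
    - rpow (w (xnode X I i) (ynode Y K 0) (tnode T J (S j))) (1 / m)
  else LD I K (fun i' k' => w (xnode X I i') (ynode Y K k') (tnode T J (S j))) i k.

(* Main.v *)
Require Import Defs.
From Stdlib Require Import Reals Lra ClassicalEpsilon Arith Lia.
Open Scope R_scope.


Lemma deriv_eq f x l : derivable_pt_lim f x l -> deriv f x = l.
Proof.
  intro H. unfold deriv.
  assert (E : exists l, derivable_pt_lim f x l) by (exists l; exact H).
  pose proof (epsilon_spec (inhabits 0) _ E) as H2.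
  exact (uniqueness_limite _ _ _ _ H2 H).
Qed.

Lemma deriv_spec f x : derivable_at f x -> derivable_pt_lim f x (deriv f x).
Proof.
  intros [l H]. rewrite (deriv_eq f x l H). exact H.
Qed.

Lemma within_pt a b f s l : a < s < b -> has_deriv_within a b f s l ->
  derivable_pt_lim f s l.
Proof.
  intros Hs H eps Heps. destruct (H eps Heps) as [d [Hd Hd']].
  assert (Hp : 0 < Rmin d (Rmin (s - a) (b - s))).
  { apply Rmin_pos; [lra| apply Rmin_pos; lra]. }
  exists (mkposreal _ Hp). intros h Hh0 Hh. simpl in Hh.
  assert (h1 := Rmin_l d (Rmin (s-a) (b-s))).
  assert (h2 := Rmin_r d (Rmin (s-a) (b-s))).
  assert (h3 := Rmin_l (s-a) (b-s)). assert (h4 := Rmin_r (s-a) (b-s)).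
  assert (Hb : -(Rmin d (Rmin (s - a) (b - s))) < h < Rmin d (Rmin (s - a) (b - s))).
  { split; [ apply Ropp_lt_cancel; rewrite Ropp_involutive; apply Rle_lt_trans with (Rabs h); [rewrite <- Rabs_Ropp; apply RRle_abs | lra] | apply Rle_lt_trans with (Rabs h); [apply RRle_abs|lra]]. }
  specialize (Hd' (s + h)).
  replace (s + h - s) with h in Hd' by ring.
  apply Hd'; [lra | lra | lra].
Qed.

Lemma within_cont a b f t l : has_deriv_within a b f t l -> cont_within a b f t.
Proof.
  intros H eps Heps. destruct (H 1 Rlt_0_1) as [d [Hd Hd']].
  set (e := Rmin d (eps / (Rabs l + 1))).
  assert (Hl : 0 < Rabs l + 1) by (pose proof (Rabs_pos l); lra).
  assert (He : 0 < e) by (apply Rmin_pos; [lra | apply Rdiv_lt_0_compat; lra]).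
  exists e. split; [exact He|]. intros s Hs Hst.
  destruct (Req_dec s t) as [->|Hne].
  { rewrite Rminus_diag, Rabs_R0. exact Heps. }
  assert (Hsd : Rabs (s - t) < d) by (apply Rlt_le_trans with e; [exact Hst| apply Rmin_l]).
  specialize (Hd' s Hs Hne Hsd).
  assert (Hst0 : s - t <> 0) by lra.
  assert (E : f s - f t = ((f s - f t) / (s - t)) * (s - t)) by (field; exact Hst0).
  rewrite E, Rabs_mult.
  assert (Hq : Rabs ((f s - f t) / (s - t)) <= Rabs l + 1).
  { pose proof (Rabs_triang_inv ((f s - f t) / (s - t)) l). lra. }
  assert (Hst2 : Rabs (s - t) < eps / (Rabs l + 1)) by (apply Rlt_le_trans with e; [exact Hst | apply Rmin_r]).
  apply Rle_lt_trans with ((Rabs l + 1) * Rabs (s - t)).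
  { apply Rmult_le_compat_r; [apply Rabs_pos | exact Hq]. }
  apply Rlt_le_trans with ((Rabs l + 1) * (eps / (Rabs l + 1))).
  { apply Rmult_lt_compat_l; lra. }
  right. field. lra.
Qed.

Lemma within_unique a b f t l1 l2 : a < b -> a <= t <= b ->
  has_deriv_within a b f t l1 -> has_deriv_within a b f t l2 -> l1 = l2.
Proof.
  intros Hab Ht H1 H2.
  destruct (Req_dec l1 l2) as [|Hne]; [assumption|exfalso].
  set (e := Rabs (l1 - l2) / 2).
  assert (He : 0 < e) by (unfold e; pose proof (Rabs_pos_lt _ (Rminus_eq_contra _ _ Hne)); lra).
  destruct (H1 e He) as [d1 [Hd1 Hd1']]. destruct (H2 e He) as [d2 [Hd2 Hd2']].
  set (d := Rmin (Rmin d1 d2) (b - a)).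
  assert (Hd : 0 < d) by (unfold d; repeat apply Rmin_pos; lra).
  assert (k1 : d <= d1) by (unfold d; pose proof (Rmin_l (Rmin d1 d2) (b-a)); pose proof (Rmin_l d1 d2); lra).
  assert (k2 : d <= d2) by (unfold d; pose proof (Rmin_l (Rmin d1 d2) (b-a)); pose proof (Rmin_r d1 d2); lra).
  assert (k3 : d <= b - a) by (unfold d; apply Rmin_r).
  assert (Hs : exists s, a <= s <= b /\ s <> t /\ Rabs (s - t) < d).
  { destruct (Rle_lt_dec (t + d/2) b).
    - exists (t + d/2). split; [lra|split;[lra|]]. replace (t + d/2 - t) with (d/2) by ring.
      rewrite Rabs_right; lra.
    - exists (t - d/2). split; [lra|split;[lra|]]. replace (t - d/2 - t) with (-(d/2)) by ring.
      rewrite Rabs_Ropp, Rabs_right; lra. }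
  destruct Hs as [s [Hs1 [Hs2 Hs3]]].
  specialize (Hd1' s Hs1 Hs2 ltac:(lra)). specialize (Hd2' s Hs1 Hs2 ltac:(lra)).
  set (q := (f s - f t) / (s - t)) in *.
  pose proof (Rabs_triang (q - l2) (l1 - q)).
  replace (q - l2 + (l1 - q)) with (l1 - l2) in H by ring.
  rewrite <- Rabs_Ropp in Hd1'. replace (- (q - l1)) with (l1 - q) in Hd1' by ring.
  unfold e in *. lra.
Qed.

Lemma MVI a b h h' B : a < b ->
 (forall s, a < s < b -> derivable_pt_lim h s (h' s)) ->
 (forall s, a < s < b -> Rabs (h' s) <= B) ->
 (forall eta, 0<eta -> exists d, 0<d /\ forall s, a<s<b -> s - a < d -> Rabs (h s - h a) < eta) ->
 (forall eta, 0<eta -> exists d, 0<d /\ forall s, a<s<b -> b - s < d -> Rabs (h s - h b) < eta) ->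
 Rabs (h b - h a) <= B * (b - a).
Proof.
  intros Hab Hd HB Ha Hb.
  assert (B0 : 0 <= B) by (apply Rle_trans with (Rabs (h' ((a+b)/2))); [apply Rabs_pos| apply HB; lra]).
  apply Rle_plus_epsilon. intros eps Heps.
  destruct (Ha (eps/2) ltac:(lra)) as [d1 [Hd1 Hd1']].
  destruct (Hb (eps/2) ltac:(lra)) as [d2 [Hd2 Hd2']].
  set (r1 := Rmin d1 ((b-a)/3)). set (r2 := Rmin d2 ((b-a)/3)).
  assert (r1p : 0 < r1) by (apply Rmin_pos; lra). assert (r2p : 0 < r2) by (apply Rmin_pos; lra).
  assert (r1a : r1 <= d1) by apply Rmin_l. assert (r1b : r1 <= (b-a)/3) by apply Rmin_r.
  assert (r2a : r2 <= d2) by apply Rmin_l. assert (r2b : r2 <= (b-a)/3) by apply Rmin_r.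
  set (a' := a + r1/2). set (b' := b - r2/2).
  destruct (MVT_cor2 h h' a' b' ltac:(unfold a', b'; lra)) as [c [Hc1 Hc2]].
  { intros c Hc. apply Hd. unfold a', b' in Hc. lra. }
  specialize (Hd1' a' ltac:(unfold a'; lra) ltac:(unfold a'; lra)).
  specialize (Hd2' b' ltac:(unfold b'; lra) ltac:(unfold b'; lra)).
  assert (Hm : Rabs (h b' - h a') <= B * (b - a)).
  { rewrite Hc1, Rabs_mult, (Rabs_right (b' - a')) by (unfold a', b'; lra).
    apply Rle_trans with (B * (b' - a')).
    - apply Rmult_le_compat_r; [unfold a', b'; lra| apply HB; unfold a', b' in Hc2; lra].
    - apply Rmult_le_compat_l; [lra| unfold a', b'; lra]. }
  replace (h b - h a) with ((h b' - h a') - (h b' - h b) + (h a' - h a)) by ring.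
  pose proof (Rabs_triang (h b' - h a' - (h b' - h b)) (h a' - h a)).
  assert (H0 : Rabs (h b' - h a' - (h b' - h b)) <= Rabs (h b' - h a') + Rabs (h b' - h b)).
  { unfold Rminus at 1. rewrite <- (Rabs_Ropp (h b' - h b)). apply Rabs_triang. }
  lra.
Qed.

Lemma MVI2 a b h h' B La Lb : a < b ->
 (forall s, a < s < b -> derivable_pt_lim h s (h' s)) ->
 (forall s, a < s < b -> Rabs (h' s) <= B) ->
 (forall eta, 0<eta -> exists d, 0<d /\ forall s, a<s<b -> s - a < d -> Rabs (h s - La) < eta) ->
 (forall eta, 0<eta -> exists d, 0<d /\ forall s, a<s<b -> b - s < d -> Rabs (h s - Lb) < eta) ->
 Rabs (Lb - La) <= B * (b - a).
Proof.
  intros Hab Hd HB Ha Hb.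
  assert (B0 : 0 <= B) by (apply Rle_trans with (Rabs (h' ((a+b)/2))); [apply Rabs_pos| apply HB; lra]).
  apply Rle_plus_epsilon. intros eps Heps.
  destruct (Ha (eps/2) ltac:(lra)) as [d1 [Hd1 Hd1']].
  destruct (Hb (eps/2) ltac:(lra)) as [d2 [Hd2 Hd2']].
  set (r1 := Rmin d1 ((b-a)/3)). set (r2 := Rmin d2 ((b-a)/3)).
  assert (r1p : 0 < r1) by (apply Rmin_pos; lra). assert (r2p : 0 < r2) by (apply Rmin_pos; lra).
  assert (r1a : r1 <= d1) by apply Rmin_l. assert (r1b : r1 <= (b-a)/3) by apply Rmin_r.
  assert (r2a : r2 <= d2) by apply Rmin_l. assert (r2b : r2 <= (b-a)/3) by apply Rmin_r.
  set (a' := a + r1/2). set (b' := b - r2/2).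
  destruct (MVT_cor2 h h' a' b' ltac:(unfold a', b'; lra)) as [c [Hc1 Hc2]].
  { intros c Hc. apply Hd. unfold a', b' in Hc. lra. }
  specialize (Hd1' a' ltac:(unfold a'; lra) ltac:(unfold a'; lra)).
  specialize (Hd2' b' ltac:(unfold b'; lra) ltac:(unfold b'; lra)).
  assert (Hm : Rabs (h b' - h a') <= B * (b - a)).
  { rewrite Hc1, Rabs_mult, (Rabs_right (b' - a')) by (unfold a', b'; lra).
    apply Rle_trans with (B * (b' - a')).
    - apply Rmult_le_compat_r; [unfold a', b'; lra| apply HB; unfold a', b' in Hc2; lra].
    - apply Rmult_le_compat_l; [lra| unfold a', b'; lra]. }
  replace (Lb - La) with ((h b' - h a') - (h b' - Lb) + (h a' - La)) by ring.
  pose proof (Rabs_triang (h b' - h a' - (h b' - Lb)) (h a' - La)).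
  assert (H0 : Rabs (h b' - h a' - (h b' - Lb)) <= Rabs (h b' - h a') + Rabs (h b' - Lb)).
  { unfold Rminus at 1. rewrite <- (Rabs_Ropp (h b' - Lb)). apply Rabs_triang. }
  lra.
Qed.

Lemma Rpower_small p eta : 0 < p -> 0 < eta -> exists d, 0 < d /\
  forall y, 0 < y < d -> Rpower y p < eta.
Proof.
  intros Hp He. exists (Rpower eta (1/p)). split; [apply exp_pos|].
  intros y Hy. apply Rlt_le_trans with (Rpower (Rpower eta (1/p)) p).
  - apply Rlt_Rpower_l; lra.
  - rewrite Rpower_mult. replace (1/p*p) with 1 by (field; lra). rewrite Rpower_1; lra.
Qed.

Lemma MVI_w A B a b h h' M : A <= a -> a < b -> b <= B ->
  (forall s, a <= s <= b -> has_deriv_within A B h s (h' s)) ->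
  (forall s, a < s < b -> Rabs (h' s) <= M) -> Rabs (h b - h a) <= M * (b - a).
Proof.
  intros Ha Hab Hb Hd HM. apply MVI with h'; try assumption.
  - intros s Hs. apply within_pt with A B; [lra| apply Hd; lra].
  - intros eta He. destruct (within_cont _ _ _ _ _ (Hd a ltac:(lra)) eta He) as [d [Hd0 Hd1]].
    exists d. split; [exact Hd0|]. intros s Hs Hsd. apply Hd1; [lra|]. rewrite Rabs_right; lra.
  - intros eta He. destruct (within_cont _ _ _ _ _ (Hd b ltac:(lra)) eta He) as [d [Hd0 Hd1]].
    exists d. split; [exact Hd0|]. intros s Hs Hsd. apply Hd1; [lra|].
    rewrite Rabs_left; lra.
Qed.

Lemma within_lin a b u s l c : has_deriv_within a b u s l ->
  has_deriv_within a b (fun r => u r - r * c) s (l - c).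
Proof.
  intros H eps He. destruct (H eps He) as [d [Hd Hd']]. exists d. split; [exact Hd|].
  intros r Hr Hne Hrd. specialize (Hd' r Hr Hne Hrd).
  replace ((u r - r * c - (u s - s * c)) / (r - s) - (l - c)) with
    ((u r - u s) / (r - s) - l) by (field; lra). exact Hd'.
Qed.

Lemma taylor u f1 f2 M T t D : 0 <= t -> 0 < D -> t + D <= T ->
  (forall s, 0 <= s <= T -> has_deriv_within 0 T u s (f1 s) /\
     has_deriv_within 0 T f1 s (f2 s) /\ Rabs (f2 s) <= M) ->
  Rabs (u (t + D) - u t - D * f1 t) <= M * D ^ 2.
Proof.
  intros Ht HD HtT H.
  assert (S1 : forall s, t < s < t + D -> Rabs (f1 s - f1 t) <= M * (s - t)).
  { intros s Hs. apply MVI_w with 0 T f2; try lra.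
    - intros r Hr. apply H; lra.
    - intros r Hr. apply H; lra. }
  set (phi := fun r => u r - r * f1 t).
  replace (u (t + D) - u t - D * f1 t) with (phi (t + D) - phi t) by (unfold phi; ring).
  apply Rle_trans with ((M * D) * ((t + D) - t)).
  - apply (MVI_w 0 T t (t + D) phi (fun r => f1 r - f1 t) (M * D)); try lra.
    + intros r Hr. unfold phi. apply within_lin. apply H; lra.
    + intros r Hr. apply Rle_trans with (M * (r - t)). apply S1; lra.
      assert (0 <= M) by (apply Rle_trans with (Rabs (f2 t)); [apply Rabs_pos| apply H; lra]).
      apply Rmult_le_compat_l; lra.
  - right. simpl. ring.
Qed.

Lemma dP K q r : 0 < r -> derivable_pt_lim (fun r => K * Rpower r q) r (K * (q * Rpower r (q - 1))).
Proof.
  intro Hr. apply (derivable_pt_lim_scal (fun r => Rpower r q)). apply derivable_pt_lim_power; exact Hr.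
Qed.

Lemma gbound (g g' : R -> R) c Mb s Y sigma : 0 < sigma < 2 -> 0 <= Mb ->
 (forall y, 0 < y < Y -> derivable_pt_lim g y (g' y)) ->
 (forall y, 0 < y < Y -> Rabs (g' y) <= Mb * Rpower y (1 - sigma)) ->
 rlim0 g c -> 0 < s < Y ->
 Rabs (g s - c) <= Mb / (2 - sigma) * Rpower s (2 - sigma).
Proof.
  intros Hs HM Hd Hb Hl Hsy.
  set (K := Mb / (2 - sigma)).
  assert (EK : K * ((2 - sigma) * Rpower 1 0) = Mb) by (unfold K; rewrite Rpower_O by lra; field; lra).
  assert (dPr : forall r, 0 < r -> K * ((2 - sigma) * Rpower r (2 - sigma - 1)) = Mb * Rpower r (1 - sigma)).
  { intros r Hr. replace (2 - sigma - 1) with (1 - sigma) by ring. unfold K. field. lra. }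
  assert (Pp : forall r, 0 <= K * Rpower r (2 - sigma)).
  { intro r. apply Rmult_le_pos; [unfold K; apply Rmult_le_pos; [lra| left; apply Rinv_0_lt_compat; lra] | left; apply exp_pos]. }
  apply Rabs_le. fold K.
  cut (forall eps, 0 < eps -> - (K * Rpower s (2 - sigma)) - eps <= g s - c <= K * Rpower s (2 - sigma) + eps).
  { intro H. split.
    - apply Rle_plus_epsilon. intros e He. specialize (H e He). lra.
    - apply Rle_plus_epsilon. intros e He. specialize (H e He). lra. }
  intros eps He. destruct (Hl eps He) as [d [Hd0 Hd1]].
  set (e := Rmin d s / 2).
  assert (e0 : 0 < e) by (unfold e; pose proof (Rmin_pos d s Hd0 ltac:(lra)); lra).
  assert (e1 : e < d) by (unfold e; pose proof (Rmin_l d s); pose proof (Rmin_pos d s Hd0 ltac:(lra)); lra).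
  assert (e2 : e < s) by (unfold e; pose proof (Rmin_r d s); pose proof (Rmin_pos d s Hd0 ltac:(lra)); lra).
  specialize (Hd1 e ltac:(lra)). apply Rabs_def2 in Hd1.
  destruct (MVT_cor2 (fun r => g r - K * Rpower r (2 - sigma))
             (fun r => g' r - K * ((2 - sigma) * Rpower r (2 - sigma - 1))) e s e2) as [c1 [Hc1 Hc2]].
  { intros r Hr. apply (derivable_pt_lim_minus g (fun r => K * Rpower r (2 - sigma))).
    apply Hd; lra. apply dP; lra. }
  destruct (MVT_cor2 (fun r => g r + K * Rpower r (2 - sigma))
             (fun r => g' r + K * ((2 - sigma) * Rpower r (2 - sigma - 1))) e s e2) as [c2 [Hc3 Hc4]].
  { intros r Hr. apply (derivable_pt_lim_plus g (fun r => K * Rpower r (2 - sigma))).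
    apply Hd; lra. apply dP; lra. }
  rewrite dPr in Hc1, Hc3 by lra.
  assert (B1 := Hb c1 ltac:(lra)). assert (B2 := Hb c2 ltac:(lra)).
  pose proof (Rle_abs (g' c1)). pose proof (Rle_abs (- g' c2)). rewrite Rabs_Ropp in H0.
  assert (N1 : (g' c1 - Mb * Rpower c1 (1 - sigma)) * (s - e) <= 0).
  { assert (0 <= (Mb * Rpower c1 (1 - sigma) - g' c1) * (s - e)) by (apply Rmult_le_pos; lra). lra. }
  assert (N2 : 0 <= (g' c2 + Mb * Rpower c2 (1 - sigma)) * (s - e)).
  { apply Rmult_le_pos; lra. }
  pose proof (Pp e). pose proof (Pp s). lra.
Qed.

Lemma Rpower_cont q y0 : 0 < y0 -> forall eta, 0 < eta -> exists d, 0 < d /\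
  forall s, 0 < s -> Rabs (s - y0) < d -> Rabs (Rpower s q - Rpower y0 q) < eta.
Proof.
  intros Hy eta He.
  assert (C : continuity_pt (fun r => Rpower r q) y0).
  { apply derivable_continuous_pt. exists (q * Rpower y0 (q - 1)). apply derivable_pt_lim_power; exact Hy. }
  destruct (C eta He) as [d [Hd Hd']]. exists d. split; [exact Hd|].
  intros s Hs Hsd. destruct (Req_dec s y0) as [->|Hne].
  { rewrite Rminus_diag, Rabs_R0; exact He. }
  apply (Hd' s). split; [split; [exact I| congruence]| exact Hsd].
Qed.

Lemma kbound (W wy : R -> R) mu F A sigma Y y1 : 0 < sigma < 2 -> 0 <= A -> 0 < y1 <= Y ->
  (forall s, 0 < s < Y -> derivable_pt_lim W s (wy s)) ->
  (forall s, 0 < s < Y -> Rabs (mu * (Rpower s (1 - sigma) * wy s) - F) <= A * Rpower s (2 - sigma)) ->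
  cont_within 0 Y W 0 -> cont_within 0 Y W y1 ->
  Rabs (mu * (W y1 - W 0) - F * Rpower y1 sigma / sigma) <= A * y1 ^ 2.
Proof.
  intros Hs HA Hy Hd Hb C0 C1.
  set (h := fun s => mu * W s - F / sigma * Rpower s sigma).
  replace (mu * (W y1 - W 0) - F * Rpower y1 sigma / sigma) with
     ((mu * W y1 - F / sigma * Rpower y1 sigma) - mu * W 0) by (field; lra).
  replace (A * y1 ^ 2) with ((A * y1) * (y1 - 0)) by ring.
  apply (MVI2 0 y1 h (fun s => mu * wy s - F / sigma * (sigma * Rpower s (sigma - 1)))); try lra.
  - intros s Hs'. unfold h.
    apply (derivable_pt_lim_minus (fun s => mu * W s) (fun s => F / sigma * Rpower s sigma)).
    + apply (derivable_pt_lim_scal W). apply Hd; lra.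
    + apply dP; lra.
  - intros s Hs'.
    assert (E : mu * wy s - F / sigma * (sigma * Rpower s (sigma - 1)) =
       Rpower s (sigma - 1) * (mu * (Rpower s (1 - sigma) * wy s) - F)).
    { rewrite Rmult_minus_distr_l.
      replace (Rpower s (sigma - 1) * (mu * (Rpower s (1 - sigma) * wy s))) with
        (mu * wy s * (Rpower s (sigma - 1) * Rpower s (1 - sigma))) by ring.
      rewrite <- Rpower_plus. replace (sigma - 1 + (1 - sigma)) with 0 by ring.
      rewrite Rpower_O by lra. field. lra. }
    rewrite E, Rabs_mult, (Rabs_right (Rpower s (sigma - 1))) by (left; apply exp_pos).
    apply Rle_trans with (Rpower s (sigma - 1) * (A * Rpower s (2 - sigma))).
    + apply Rmult_le_compat_l; [left; apply exp_pos| apply Hb; lra].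
    + replace (Rpower s (sigma - 1) * (A * Rpower s (2 - sigma))) with
        (A * (Rpower s (sigma - 1) * Rpower s (2 - sigma))) by ring.
      rewrite <- Rpower_plus. replace (sigma - 1 + (2 - sigma)) with 1 by ring.
      rewrite Rpower_1 by lra. apply Rmult_le_compat_l; lra.
  - intros eta He.
    set (c := Rabs mu + 1). set (c2 := Rabs (F / sigma) + 1).
    assert (cp : 0 < c) by (unfold c; pose proof (Rabs_pos mu); lra).
    assert (c2p : 0 < c2) by (unfold c2; pose proof (Rabs_pos (F/sigma)); lra).
    destruct (C0 (eta / 4 / c) ltac:(apply Rdiv_lt_0_compat; lra)) as [d1 [Hd1 Hd1']].
    destruct (Rpower_small sigma (eta / 4 / c2) ltac:(lra) ltac:(apply Rdiv_lt_0_compat; lra)) as [d2 [Hd2 Hd2']].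
    exists (Rmin d1 d2). split; [apply Rmin_pos; lra|]. intros s Hs' Hsd.
    pose proof (Rmin_l d1 d2). pose proof (Rmin_r d1 d2).
    specialize (Hd1' s ltac:(lra) ltac:(rewrite Rminus_0_r, Rabs_right; lra)).
    specialize (Hd2' s ltac:(lra)).
    unfold h.
    replace (mu * W s - F / sigma * Rpower s sigma - mu * W 0) with
      (mu * (W s - W 0) - F / sigma * Rpower s sigma) by ring.
    pose proof (Rabs_triang (mu * (W s - W 0)) (- (F / sigma * Rpower s sigma))).
    rewrite Rabs_Ropp, !Rabs_mult, (Rabs_right (Rpower s sigma)) in H1 by (left; apply exp_pos).
    assert (Q1 : Rabs mu * Rabs (W s - W 0) <= c * (eta / 4 / c)).
    { apply Rmult_le_compat; try apply Rabs_pos; [unfold c; lra| lra]. }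
    assert (Q2 : Rabs (F / sigma) * Rpower s sigma <= c2 * (eta / 4 / c2)).
    { apply Rmult_le_compat; try apply Rabs_pos; [left; apply exp_pos| unfold c2; lra| lra]. }
    replace (c * (eta / 4 / c)) with (eta / 4) in Q1 by (field; lra).
    replace (c2 * (eta / 4 / c2)) with (eta / 4) in Q2 by (field; lra).
    unfold Rminus in *. lra.
  - intros eta He.
    set (c := Rabs mu + 1). set (c2 := Rabs (F / sigma) + 1).
    assert (cp : 0 < c) by (unfold c; pose proof (Rabs_pos mu); lra).
    assert (c2p : 0 < c2) by (unfold c2; pose proof (Rabs_pos (F/sigma)); lra).
    destruct (C1 (eta / 4 / c) ltac:(apply Rdiv_lt_0_compat; lra)) as [d1 [Hd1 Hd1']].
    destruct (Rpower_cont sigma y1 ltac:(lra) (eta / 4 / c2) ltac:(apply Rdiv_lt_0_compat; lra)) as [d2 [Hd2 Hd2']].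
    exists (Rmin d1 d2). split; [apply Rmin_pos; lra|]. intros s Hs' Hsd.
    pose proof (Rmin_l d1 d2). pose proof (Rmin_r d1 d2).
    specialize (Hd1' s ltac:(lra) ltac:(rewrite Rabs_left; lra)).
    specialize (Hd2' s ltac:(lra) ltac:(rewrite Rabs_left; lra)).
    unfold h.
    replace (mu * W s - F / sigma * Rpower s sigma - (mu * W y1 - F / sigma * Rpower y1 sigma)) with
      (mu * (W s - W y1) - F / sigma * (Rpower s sigma - Rpower y1 sigma)) by ring.
    pose proof (Rabs_triang (mu * (W s - W y1)) (- (F / sigma * (Rpower s sigma - Rpower y1 sigma)))).
    rewrite Rabs_Ropp, !Rabs_mult in H1.
    assert (Q1 : Rabs mu * Rabs (W s - W y1) <= c * (eta / 4 / c)).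
    { apply Rmult_le_compat; try apply Rabs_pos; [unfold c; lra| lra]. }
    assert (Q2 : Rabs (F / sigma) * Rabs (Rpower s sigma - Rpower y1 sigma) <= c2 * (eta / 4 / c2)).
    { apply Rmult_le_compat; try apply Rabs_pos; [unfold c2; lra| lra]. }
    replace (c * (eta / 4 / c)) with (eta / 4) in Q1 by (field; lra).
    replace (c2 * (eta / 4 / c2)) with (eta / 4) in Q2 by (field; lra).
    unfold Rminus in *. lra.
Qed.

Lemma lim_ineq (A B : R -> R) E T : 0 < T -> cont_within 0 T A 0 -> cont_within 0 T B 0 ->
  (forall t, 0 < t <= T -> Rabs (A t - B t) <= E) -> Rabs (A 0 - B 0) <= E.
Proof.
  intros HT CA CB H. apply Rle_plus_epsilon. intros eps He.
  destruct (CA (eps/2) ltac:(lra)) as [d1 [Hd1 Hd1']].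
  destruct (CB (eps/2) ltac:(lra)) as [d2 [Hd2 Hd2']].
  set (t := Rmin (Rmin d1 d2) T / 2).
  assert (tp : 0 < Rmin (Rmin d1 d2) T) by (repeat apply Rmin_pos; lra).
  pose proof (Rmin_l (Rmin d1 d2) T). pose proof (Rmin_r (Rmin d1 d2) T).
  pose proof (Rmin_l d1 d2). pose proof (Rmin_r d1 d2).
  assert (Ht : 0 < t <= T) by (unfold t; lra).
  assert (Ha : Rabs (t - 0) < d1) by (rewrite Rminus_0_r, Rabs_right; unfold t; lra).
  assert (Hb : Rabs (t - 0) < d2) by (rewrite Rminus_0_r, Rabs_right; unfold t; lra).
  specialize (Hd1' t ltac:(lra) Ha). specialize (Hd2' t ltac:(lra) Hb).
  specialize (H t Ht).
  replace (A 0 - B 0) with (- (A t - A 0) + (A t - B t) + (B t - B 0)) by ring.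
  pose proof (Rabs_triang (- (A t - A 0) + (A t - B t)) (B t - B 0)).
  pose proof (Rabs_triang (- (A t - A 0)) (A t - B t)). rewrite Rabs_Ropp in H5.
  lra.
Qed.

Lemma cont_scal a b f t k : cont_within a b f t -> cont_within a b (fun r => k * f r) t.
Proof.
  intros C eps He. set (c := Rabs k + 1).
  assert (cp : 0 < c) by (unfold c; pose proof (Rabs_pos k); lra).
  destruct (C (eps / c) ltac:(apply Rdiv_lt_0_compat; lra)) as [d [Hd Hd']].
  exists d. split; [exact Hd|]. intros s Hs Hsd. specialize (Hd' s Hs Hsd).
  rewrite <- Rmult_minus_distr_l, Rabs_mult.
  apply Rle_lt_trans with (Rabs k * (eps / c)).
  { apply Rmult_le_compat_l; [apply Rabs_pos| lra]. }
  apply Rlt_le_trans with (c * (eps / c)).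
  { apply Rmult_lt_compat_r; [apply Rdiv_lt_0_compat; lra| unfold c; lra]. }
  right. field. lra.
Qed.
Theorem theorem4p1
  (m sigma T X Y a : R) (f : R -> R) (w : R -> R -> R -> R)
  (LD : discOp) (Reg : (R -> R -> R) -> R -> Prop)
  (Hm : 1 <= m) (Hsig : 0 < sigma < 2) (HT : 0 < T) (HX : 0 < X) (HY : 0 < Y)
  (* data f >= 0, bounded *)
  (Hf0 : forall x, 0 <= f x) (HfInf : exists B, forall x, Rabs (f x) <= B)
  (* w >= 0 on the closed domain (so that w^{1/m} makes sense) *)
  (Hwnn : forall x y t, -X <= x <= X -> 0 <= y <= Y -> 0 <= t <= T -> 0 <= w x y t)
  (* regularity of w *)
  (Hdiff : forall x y t, -X < x < X -> 0 < y < Y -> 0 <= t <= T ->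
      derivable_at (fun s => w s y t) x /\ derivable_at (fun s => pDx w s y t) x)
  (Hdiffy : forall x y t, -X <= x <= X -> 0 < y < Y -> 0 <= t <= T ->
      derivable_at (fun s => w x s t) y)
  (Hbnd : exists M, forall x y t, -X < x < X -> 0 < y < Y -> 0 <= t <= T ->
      Rabs (w x y t) <= M /\ Rabs (pDx w x y t) <= M /\ Rabs (pDxx w x y t) <= M)
  (Hconty : forall x t, -X < x < X -> 0 <= t <= T ->
      forall y, 0 <= y <= Y -> cont_within 0 Y (fun s => w x s t) y)
  (Hcontt : forall x y, -X < x < X -> 0 < y < Y ->
      forall t, 0 <= t <= T -> cont_within 0 T (fun s => pDy w x y s) t)
  (HReg : exists M, forall t, 0 <= t <= T -> Reg (fun x y => w x y t) M)
  (* u = w^{1/m}|_{y=0} is C^2 in t, u^m is C^2 in x, bounded derivatives *)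
  (Hut : exists M, forall x, -X <= x <= X ->
      C2_within 0 T (fun s => rpow (w x 0 s) (1 / m)) M)
  (Humx : exists M, forall t, 0 <= t <= T ->
      C2_within (-X) X (fun s => rpow (rpow (w s 0 t) (1 / m)) m) M)
  (* (P_Omega): L_sigma w = 0 in Omega x (0,T] *)
  (Heq : forall x y t, -X < x < X -> 0 < y < Y -> 0 < t <= T ->
      derivable_at (fun s => Rpower s (1 - sigma) * pDy w x s t) y /\
      Lsigma sigma (fun x' y' => w x' y' t) x y = 0)
  (* dynamic boundary condition on Gamma_d x (0,T] *)
  (Hbc : forall x t, -X <= x <= X -> 0 < t <= T ->
      exists c, rlim0 (fun y => Rpower y (1 - sigma) * pDy w x y t) c /\
        has_deriv_within 0 T (fun s => rpow (w x 0 s) (1 / m)) t (mu_sigma sigma * c))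
  (* initial condition *)
  (Hic : forall x, -X <= x <= X -> w x 0 0 = rpow (f x) m)
  (* homogeneous Dirichlet condition on Gamma_h *)
  (Hgh : forall x y t, 0 < t <= T ->
      (((x = -X \/ x = X) /\ 0 < y <= Y) \/ (-X <= x <= X /\ y = Y)) -> w x y t = 0)
  (* L^D is a discretization of L_sigma of order a *)
  (HLD : disc_order sigma X Y a LD Reg) :
  exists C, forall I J K : nat, admissible X Y I K -> (0 < J)%nat ->
    forall j i k, (j < J)%nat -> (i <= I)%nat -> (k <= K)%nat ->
      Rabs (trunc sigma m T X Y LD w I J K j i k)
      <= C * (dtJ T J * (Rpower (dxI X I) (2 - sigma) + dtJ T J)
              + Rpower (dxI X I) a).

Proof.
  destruct Hbnd as [Mb0 HMb]. set (Mb := Rabs Mb0).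
  destruct Hut as [Mu HMu]. destruct HReg as [Mr HMr].
  destruct (HLD Mr) as [CLD HCLD].
  set (mu := mu_sigma sigma).
  set (A := Rabs mu * (Mb / (2 - sigma))).
  assert (HA : 0 <= A).
  { unfold A, Mb. apply Rmult_le_pos; [apply Rabs_pos|].
    apply Rmult_le_pos; [apply Rabs_pos| left; apply Rinv_0_lt_compat; lra]. }
  assert (KEY : forall x, -X < x < X -> forall f1 f2 : R -> R,
     (forall s, 0 <= s <= T -> has_deriv_within 0 T (fun s => rpow (w x 0 s) (1 / m)) s (f1 s) /\
        has_deriv_within 0 T f1 s (f2 s)) ->
     forall t, 0 <= t <= T -> forall y1, 0 < y1 <= Y ->
     Rabs (mu * (w x y1 t - w x 0 t) - f1 t * Rpower y1 sigma / sigma) <= A * y1 ^ 2).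
  { intros x Hx f1 f2 Hf t Ht y1 Hy1.
    assert (P : forall s, 0 < s < Y -> forall t, 0 <= t <= T ->
       Rabs (mu * (Rpower s (1 - sigma) * pDy w x s t) - f1 t) <= A * Rpower s (2 - sigma)).
    { intros s Hs.
      assert (Ppos : forall t, 0 < t <= T ->
        Rabs (mu * (Rpower s (1 - sigma) * pDy w x s t) - f1 t) <= A * Rpower s (2 - sigma)).
      { intros t0 Ht0.
        destruct (Hbc x t0 ltac:(lra) Ht0) as [c [Hc1 Hc2]].
        assert (Ef : f1 t0 = mu * c).
        { apply (within_unique 0 T (fun s => rpow (w x 0 s) (1 / m)) t0); try lra.
          apply Hf; lra. exact Hc2. }
        rewrite Ef, <- Rmult_minus_distr_l, Rabs_mult. unfold A. rewrite Rmult_assoc.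
        apply Rmult_le_compat_l; [apply Rabs_pos|].
        apply (gbound (fun s => Rpower s (1 - sigma) * pDy w x s t0)
                 (fun y => - (Rpower y (1 - sigma) * pDxx w x y t0)) c Mb s Y sigma); try lra.
        - unfold Mb; apply Rabs_pos.
        - intros y Hy. destruct (Heq x y t0 Hx Hy Ht0) as [Hd HL].
          pose proof (deriv_spec _ _ Hd) as Hd'.
          assert (E1 : deriv (fun x' => Rpower y (1 - sigma) * pDx w x' y t0) x =
                       Rpower y (1 - sigma) * pDxx w x y t0).
          { apply deriv_eq. apply (derivable_pt_lim_scal (fun x' => pDx w x' y t0)).
            apply deriv_spec. apply (Hdiff x y t0 Hx Hy ltac:(lra)). }
          assert (HL' : deriv (fun x' => Rpower y (1 - sigma) * pDx w x' y t0) x +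
               deriv (fun s => Rpower s (1 - sigma) * pDy w x s t0) y = 0) by exact HL.
          rewrite E1 in HL'.
          replace (- (Rpower y (1 - sigma) * pDxx w x y t0)) with
             (deriv (fun s => Rpower s (1 - sigma) * pDy w x s t0) y) by lra.
          exact Hd'.
        - intros y Hy. rewrite Rabs_Ropp, Rabs_mult, (Rabs_right (Rpower y (1 - sigma))) by (left; apply exp_pos).
          rewrite (Rmult_comm Mb). apply Rmult_le_compat_l; [left; apply exp_pos|].
          destruct (HMb x y t0 Hx Hy ltac:(lra)) as [_ [_ H3]]. unfold Mb.
          apply Rle_trans with Mb0; [exact H3| apply Rle_abs].
        - exact Hc1. }
      intros t0 Ht0. destruct (Rlt_dec 0 t0) as [Hp|Hn].
      - apply Ppos; lra.
      - assert (t0 = 0) by lra. subst t0.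
        apply (lim_ineq (fun t => mu * (Rpower s (1 - sigma) * pDy w x s t)) f1 _ T HT).
        + apply (cont_scal 0 T (fun t => Rpower s (1 - sigma) * pDy w x s t) 0 mu).
          apply (cont_scal 0 T (fun t => pDy w x s t) 0 (Rpower s (1 - sigma))).
          apply Hcontt; lra.
        + apply (within_cont 0 T f1 0 (f2 0)). apply Hf; lra.
        + exact Ppos. }
    apply (kbound (fun s => w x s t) (fun s => pDy w x s t) mu (f1 t) A sigma Y y1); try lra.
    - intros s Hs. apply deriv_spec. apply Hdiffy; lra.
    - intros s Hs. apply P; lra.
    - apply Hconty; lra.
    - apply Hconty; lra. }
  exists (Rabs CLD + sigma * A + Rabs Mu).
  intros I J K Hadm HJ j i k Hj Hi Hk.
  destruct Hadm as [HI [HK Hdd]].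
  assert (INRI : 0 < INR I) by (apply lt_0_INR; exact HI).
  assert (INRK : 1 <= INR K) by (apply (le_INR 1); exact HK).
  assert (INRJ : 0 < INR J) by (apply lt_0_INR; exact HJ).
  set (dx := dxI X I) in *. set (dt := dtJ T J) in *.
  assert (dxp : 0 < dx) by (unfold dx, dxI; apply Rdiv_lt_0_compat; lra).
  assert (dtp : 0 < dt) by (unfold dt, dtJ; apply Rdiv_lt_0_compat; lra).
  assert (dxY : dx <= Y).
  { rewrite <- Hdd. unfold dyK. apply Rmult_le_reg_r with (INR K); [lra|].
    unfold Rdiv. rewrite Rmult_assoc, Rinv_l by lra. nra. }
  assert (RHS0 : 0 <= dt * (Rpower dx (2 - sigma) + dt)).
  { apply Rmult_le_pos; [lra|]. pose proof (exp_pos ((2 - sigma) * ln dx)). unfold Rpower. lra. }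
  assert (RHSa : 0 < Rpower dx a) by apply exp_pos.
  assert (C0 : 0 <= Rabs CLD + sigma * A + Rabs Mu).
  { pose proof (Rabs_pos CLD). pose proof (Rabs_pos Mu). nra. }
  assert (Htj : 0 <= tnode T J j <= T).
  { unfold tnode. fold dt. split. apply Rmult_le_pos; [apply pos_INR| lra].
    unfold dt, dtJ. apply Rmult_le_reg_r with (INR J); [lra|].
    unfold Rdiv. replace (INR j * (T * / INR J) * INR J) with (INR j * T) by (field; lra).
    apply le_INR in Hj. rewrite S_INR in Hj. nra. }
  assert (EtS : tnode T J (S j) = tnode T J j + dt) by (unfold tnode; fold dt; rewrite S_INR; ring).
  assert (HtS : 0 < tnode T J (S j) <= T).
  { rewrite EtS. split; [lra|]. unfold tnode, dt, dtJ.
    apply Rmult_le_reg_r with (INR J); [lra|].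
    replace ((INR j * (T / INR J) + T / INR J) * INR J) with ((INR j + 1) * T) by (field; lra).
    apply le_INR in Hj. rewrite S_INR in Hj. nra. }
  unfold trunc. fold dx dt.
  destruct (Nat.eqb i 0 || Nat.eqb i I || Nat.eqb k K)%bool eqn:Eb.
  { rewrite Rabs_R0. apply Rmult_le_pos; [exact C0| lra]. }
  apply Bool.orb_false_iff in Eb. destruct Eb as [Eb Ek]. apply Bool.orb_false_iff in Eb.
  destruct Eb as [Ei0 EiI].
  apply Nat.eqb_neq in Ei0, EiI, Ek.
  assert (Hx : -X < xnode X I i < X).
  { unfold xnode. fold dx.
    assert (Ei : INR I * dx = 2 * X) by (unfold dx, dxI; field; lra).
    assert (i1 : 1 <= INR i) by (apply (le_INR 1); lia).
    assert (i2 : INR i < INR I) by (apply lt_INR; lia).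
    split; nra. }
  destruct (Nat.eqb k 0) eqn:Ek0.
  -
    apply Nat.eqb_eq in Ek0. subst k.
    assert (Ey0 : ynode Y K 0 = 0) by (unfold ynode; simpl; ring).
    assert (Ey1 : ynode Y K 1 = dx) by (unfold ynode; simpl; rewrite Hdd; fold dx; ring).
    rewrite Ey0, Ey1, EtS.
    set (x := xnode X I i) in *. set (t := tnode T J j) in *.
    destruct (HMu x ltac:(lra)) as [f1 [f2 Hf]].
    assert (Hf' : forall s, 0 <= s <= T ->
       has_deriv_within 0 T (fun s => rpow (w x 0 s) (1 / m)) s (f1 s) /\
       has_deriv_within 0 T f1 s (f2 s)) by (intros s Hs; destruct (Hf s Hs) as [? [? _]]; tauto).
    pose proof (KEY x Hx f1 f2 Hf' t Htj dx ltac:(lra)) as K1.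
    pose proof (taylor (fun s => rpow (w x 0 s) (1 / m)) f1 f2 Mu T t dt
       ltac:(lra) dtp ltac:(lra) ltac:(intros s Hs; destruct (Hf s Hs) as [? [? [? [? ?]]]]; tauto)) as K2.
    cbv beta in K2.
    set (W1 := w x dx t) in *. set (W0 := w x 0 t) in *.
    set (u0 := rpow W0 (1 / m)) in *. set (u1 := rpow (w x 0 (t + dt)) (1 / m)) in *.
    set (D := mu * (W1 - W0) - f1 t * Rpower dx sigma / sigma) in *.
    assert (Pd : 0 < Rpower dx sigma) by apply exp_pos.
    assert (Enu : nu_sigma sigma * (dt / Rpower dx sigma) * (W1 - W0) + u0 - u1 =
        dt * sigma * D / Rpower dx sigma - (u1 - u0 - dt * f1 t)).
    { unfold D, nu_sigma. fold mu. field. split; lra. }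
    rewrite Enu.
    assert (E2 : dx ^ 2 / Rpower dx sigma = Rpower dx (2 - sigma)).
    { replace (dx ^ 2) with (Rpower dx (INR 2)) by (apply Rpower_pow; lra).
      replace (INR 2) with ((2 - sigma) + sigma) by (simpl; ring).
      rewrite Rpower_plus. field. lra. }
    assert (B1 : Rabs (dt * sigma * D / Rpower dx sigma) <= sigma * A * dt * Rpower dx (2 - sigma)).
    { replace (dt * sigma * D / Rpower dx sigma) with ((dt * sigma / Rpower dx sigma) * D) by (field; lra).
      rewrite Rabs_mult, (Rabs_right (dt * sigma / Rpower dx sigma)).
      2: { left. apply Rdiv_lt_0_compat; [apply Rmult_lt_0_compat|]; lra. }
      apply Rle_trans with ((dt * sigma / Rpower dx sigma) * (A * dx ^ 2)).
      - apply Rmult_le_compat_l; [left; apply Rdiv_lt_0_compat; [apply Rmult_lt_0_compat|]; lra| exact K1].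
      - rewrite <- E2. right. field. lra. }
    pose proof (Rabs_triang (dt * sigma * D / Rpower dx sigma) (- (u1 - u0 - dt * f1 t))).
    rewrite Rabs_Ropp in H.
    assert (Hmu : Mu <= Rabs Mu) by apply Rle_abs.
    assert (Q : Mu * dt ^ 2 <= Rabs Mu * dt ^ 2) by (apply Rmult_le_compat_r; [nra| exact Hmu]).
    assert (Pp : 0 < Rpower dx (2 - sigma)) by apply exp_pos.
    assert (Z : 0 <= Rabs CLD * (dt * (Rpower dx (2 - sigma) + dt) + Rpower dx a))
      by (apply Rmult_le_pos; [apply Rabs_pos| lra]).
    assert (Z2 : 0 <= sigma * A * Rpower dx a) by (apply Rmult_le_pos; [nra| lra]).
    assert (Z3 : 0 <= Rabs Mu * (dt * Rpower dx (2 - sigma) + Rpower dx a))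
      by (apply Rmult_le_pos; [apply Rabs_pos| nra]).
    assert (Z4 : 0 <= sigma * A * dt * dt) by (apply Rmult_le_pos; [nra| lra]).
    unfold Rminus at 1. nra.
  -
    apply Nat.eqb_neq in Ek0.
    assert (Hy : 0 < ynode Y K k < Y).
    { unfold ynode. rewrite Hdd. fold dx.
      assert (EKd : INR K * dx = Y) by (rewrite <- Hdd; unfold dyK; field; lra).
      assert (k1 : 1 <= INR k) by (apply (le_INR 1); lia).
      assert (k2 : INR k < INR K) by (apply lt_INR; lia).
      split; nra. }
    pose proof (HCLD (fun x y => w x y (tnode T J (S j))) (HMr (tnode T J (S j)) ltac:(lra))
       I K (conj HI (conj HK Hdd)) i k ltac:(lia) ltac:(lia)) as HL.
    cbv beta in HL. fold dx in HL.
    destruct (Heq _ _ _ Hx Hy HtS) as [_ HL0]. rewrite HL0, Rminus_0_r in HL.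
    apply Rle_trans with (CLD * Rpower dx a); [exact HL|].
    assert (Z : 0 <= (Rabs CLD + sigma * A + Rabs Mu) * (dt * (Rpower dx (2 - sigma) + dt))) by (apply Rmult_le_pos; lra).
    pose proof (Rle_abs CLD). pose proof (Rabs_pos Mu).
    assert (0 <= sigma * A) by nra. nra.
Qed.
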